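(* Let $\nu(x)=\sum_{k\ge0}\nu_kL_k(x)$ and $\sigma(x)=\sum_{k\ge0}\sigma_kL_k(x)$ on $I=(-1,1)$ and, for $m,n\ge2$, let $$a_{m,n}:=\int_{-1}^1\nu\,D\eta_m\,D\eta_n\,dx+\int_{-1}^1\sigma\,\eta_m\,\eta_n\,dx.$$ If there exist $\eta>0$ and a constant $C_\eta>0$ depending only on $\eta$ such that $|\nu_k|,|\sigma_k|\le C_\eta e^{-\eta k}$ for all $k\ge0$, then $|a_{m,n}|\le Ce^{-\eta|n-m|}$ for all $n,m\ge2$, where $C$ is a constant depending only on $\eta$.
   Context: $I=(-1,1)$, $D=d/dx$. $L_k$ denotes the Legendre polynomial of degree $k$ with $L_k(1)=1$. The Babuška–Shen basis is $\eta_k(x)=\frac{1}{\sqrt{4k-2}}(L_{k-2}(x)-L_k(x))$, $k\ge2$. *)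

(* Defs.v *)
From Stdlib Require Import Reals Lra.
From Coquelicot Require Import Coquelicot.
Open Scope R_scope.

(* leg_pair n x = (L_n x, L_{n+1} x), via Bonnet's recurrence
   (k+1) L_{k+1} = (2k+1) x L_k - k L_{k-1},  L_0 = 1, L_1 = x. *)
Fixpoint leg_pair (n : nat) (x : R) : R * R :=
  match n with
  | O => (1, x)
  | S p =>
      let (a, b) := leg_pair p x in
      (b, ((2 * INR p + 3) * x * b - (INR p + 1) * a) / (INR p + 2))
  end.

(* Legendre polynomial of degree k, normalized by L_k(1) = 1. *)
Definition Legendre (k : nat) (x : R) : R := fst (leg_pair k x).

Definition bs_eta (k : nat) (x : R) : R :=
  / sqrt (4 * INR k - 2) * (Legendre (k - 2) x - Legendre k x).

Definition leg_series (c : nat -> R) (x : R) : R :=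
  Series (fun k => c k * Legendre k x).

Definition a_mn (nu sigma : nat -> R) (m n : nat) : R :=
  RInt (fun x => leg_series nu x * Derive (bs_eta m) x * Derive (bs_eta n) x) (-1) 1
  + RInt (fun x => leg_series sigma x * bs_eta m x * bs_eta n x) (-1) 1.

(* Main.v *)
Require Import Defs.
From Stdlib Require Import Reals Lra Lia.
From Coquelicot Require Import Coquelicot.
Open Scope R_scope.

Notation L := Legendre.

Lemma leg_0 x : L 0 x = 1.
Proof. reflexivity. Qed.
Lemma leg_1 x : L 1 x = x.
Proof. reflexivity. Qed.

Lemma leg_SS n x : L (S (S n)) x =
  ((2 * INR n + 3) * x * L (S n) x - (INR n + 1) * L n x) / (INR n + 2).
Proof.
  unfold Legendre. cbn [leg_pair fst]. destruct (leg_pair n x) as [a b]. reflexivity.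
Qed.

Lemma INR_pos_2 n : 0 < INR n + 2.
Proof. pose proof (pos_INR n). lra. Qed.

Lemma leg_rec k x : (INR k + 1) * L (S k) x = (2 * INR k + 1) * x * L k x - INR k * L (k - 1) x.
Proof.
  destruct k as [|j].
  - rewrite leg_1, leg_0. simpl. ring.
  - rewrite leg_SS. replace (S j - 1)%nat with j by lia. rewrite S_INR.
    pose proof (INR_pos_2 j). field. lra.
Qed.

Lemma leg_at1 n : L n 1 = 1.
Proof.
  assert (H : forall n, L n 1 = 1 /\ L (S n) 1 = 1).
  { induction n0 as [|n0 [IH1 IH2]]. split; reflexivity.
    split. exact IH2. rewrite leg_SS, IH1, IH2. pose proof (INR_pos_2 n0). field. lra. }
  apply H.
Qed.

Lemma leg_atm1 n : L n (-1) = (-1) ^ n.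
Proof.
  assert (H : forall n, L n (-1) = (-1)^n /\ L (S n) (-1) = (-1)^(S n)).
  { induction n0 as [|n0 [IH1 IH2]]. split; [reflexivity| rewrite leg_1; ring].
    split. exact IH2. rewrite leg_SS, IH1, IH2. pose proof (INR_pos_2 n0).
    simpl pow. field. lra. }
  apply H.
Qed.

Definition Fen n x := (INR n + 2) * (1 - x*x) * (L (S n) x)^2
   + (INR n + 1) * (L n x - x * L (S n) x)^2.

Lemma Fen_step n x : Fen (S n) x / (INR n + 3) <= Fen n x / (INR n + 2).
Proof.
  unfold Fen. rewrite leg_SS. rewrite S_INR.
  set (a := L n x). set (b := L (S n) x).
  set (N := INR n + 1).
  assert (HN : 0 < N) by (unfold N; pose proof (pos_INR n); lra).
  replace (INR n + 2) with (N + 1) by (unfold N; ring).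
  replace (INR n + 3) with (N + 2) by (unfold N; ring).
  replace (INR n + 1 + 2) with (N+2) by (unfold N; ring).
  replace (INR n + 1 + 1) with (N+1) by (unfold N; ring).
  replace (2 * INR n + 3) with (2*N+1) by (unfold N; ring).
  set (s := 1 - x*x). set (p := N / (N+1)). set (u := a - x*b).
  assert (E : (N + 2) * s * (((2 * N + 1) * x * b - N * a) / (N + 1)) ^ 2 +
      (N + 1) * (b - x * (((2 * N + 1) * x * b - N * a) / (N + 1))) ^ 2
      = (N+2) * ((N+1) * s * b^2 + N * (a - x*b)^2) / (N+1)
        - ((s*b + x*p*u)^2 + p*(2-p)*u^2)).
  { unfold p, u, s. field. lra. }
  rewrite E.
  assert (0 <= p <= 1). { unfold p. split. apply Rlt_le, Rdiv_lt_0_compat; lra.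
     apply Rmult_le_reg_r with (N+1). lra. unfold Rdiv. rewrite Rmult_assoc, Rinv_l; lra. }
  assert (0 <= (s*b + x*p*u)^2 + p*(2-p)*u^2). { pose proof (pow2_ge_0 (s*b+x*p*u)). pose proof (pow2_ge_0 u). nra. }
  set (X := (s * b + x * p * u) ^ 2 + p * (2 - p) * u ^ 2) in *.
  set (Q := (N + 1) * s * b ^ 2 + N * u ^ 2).
  change (a - x*b) with u. fold Q.
  replace (((N + 2) * Q / (N + 1) - X) / (N + 2)) with (Q/(N+1) - X/(N+2)) by (field; lra).
  assert (0 <= X/(N+2)) by (apply Rdiv_le_0_compat; lra). lra.
Qed.

Lemma Fen_bound n x : -1 <= x <= 1 -> Fen n x / (INR n + 2) <= 1 - x*x.
Proof.
  intros Hx. induction n as [|n IH].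
  - unfold Fen. rewrite leg_1, leg_0. simpl. assert (0 <= 1 - x*x) by nra. nra.
  - eapply Rle_trans; [|exact IH]. replace (INR (S n) + 2) with (INR n + 3) by (rewrite S_INR; ring).
    apply Fen_step.
Qed.

Lemma leg_bound n x : -1 <= x <= 1 -> Rabs (L n x) <= 1.
Proof.
  intros Hx.
  destruct (Req_dec x 1) as [->|H1]. { rewrite leg_at1, Rabs_R1. lra. }
  destruct (Req_dec x (-1)) as [->|H2]. { rewrite leg_atm1, pow_1_abs. lra. }
  destruct n as [|n]. { rewrite leg_0, Rabs_R1. lra. }
  pose proof (Fen_bound n x Hx) as H. unfold Fen in H.
  assert (Hs : 0 < 1 - x*x) by nra.
  pose proof (INR_pos_2 n) as Hn.
  assert (Hq : (1 - x*x) * L (S n) x ^ 2 <= 1 - x*x).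
  { apply Rmult_le_reg_r with (INR n + 2). lra.
    assert (0 <= (INR n + 1) * (L n x - x * L (S n) x) ^ 2).
    { apply Rmult_le_pos. pose proof (pos_INR n); lra. apply pow2_ge_0. }
    apply Rmult_le_compat_r with (r := INR n + 2) in H; [|lra].
    unfold Rdiv in H. rewrite Rmult_assoc, Rinv_l in H by lra. nra. }
  assert (L (S n) x ^ 2 <= 1) by nra.
  apply Rabs_le. nra.
Qed.

Lemma dR_plus (f g : R -> R) (x df dg : R) : is_derive f x df -> is_derive g x dg ->
  is_derive (fun y => f y + g y) x (df + dg).
Proof. intros. apply (is_derive_plus f g x df dg); auto. Qed.
Lemma dR_minus (f g : R -> R) (x df dg : R) : is_derive f x df -> is_derive g x dg ->
  is_derive (fun y => f y - g y) x (df - dg).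
Proof. intros. apply (is_derive_minus f g x df dg); auto. Qed.
Lemma dR_mult (f g : R -> R) (x df dg : R) : is_derive f x df -> is_derive g x dg ->
  is_derive (fun y => f y * g y) x (df * g x + f x * dg).
Proof. intros. apply (is_derive_mult f g x df dg); auto. intros; apply Rmult_comm. Qed.
Lemma dR_const (c x : R) : is_derive (fun _ => c) x 0.
Proof. apply (is_derive_const c x). Qed.
Lemma dR_id (x : R) : is_derive (fun y : R => y) x 1.
Proof. apply (is_derive_id x). Qed.
Lemma dR_eq (f : R -> R) (x l l' : R) : is_derive f x l -> l = l' -> is_derive f x l'.
Proof. intros H ->; exact H. Qed.
Lemma dR_ext (f g : R -> R) (x l : R) : (forall y, f y = g y) -> is_derive f x l -> is_derive g x l.
Proof. intros H H'. eapply is_derive_ext; eauto. Qed.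

Fixpoint Dleg (n : nat) (x : R) : R :=
  match n with O => 0 | S p => x * Dleg p x + INR (S p) * L p x end.

Lemma Dleg_id n x :
  x * Dleg (S n) x - Dleg n x = INR (S n) * L (S n) x /\
  (x*x - 1) * Dleg (S n) x = INR (S n) * (x * L (S n) x - L n x).
Proof.
  induction n as [|n [IH1 IH2]].
  - simpl. rewrite leg_1, leg_0. split; ring.
  - pose proof (INR_pos_2 n) as Hn.
    change (Dleg (S (S n)) x) with (x * Dleg (S n) x + INR (S (S n)) * L (S n) x).
    assert (HL : (INR n + 2) * L (S (S n)) x = (2 * INR n + 3) * x * L (S n) x - (INR n + 1) * L n x).
    { rewrite leg_SS. field. lra. }
    rewrite !S_INR in *. split.
    + replace (x * (x * Dleg (S n) x + (INR n + 1 + 1) * L (S n) x) - Dleg (S n) x)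
        with ((x*x-1) * Dleg (S n) x + (INR n + 1 + 1) * x * L (S n) x) by ring.
      rewrite IH2. lra.
    + replace ((x * x - 1) * (x * Dleg (S n) x + (INR n + 1 + 1) * L (S n) x))
        with (x * ((x * x - 1) * Dleg (S n) x) + (INR n + 1 + 1) * (x*x-1) * L (S n) x) by ring.
      rewrite IH2.
      replace ((INR n + 1 + 1) * (x * L (S (S n)) x - L (S n) x)) with
        (x * ((INR n + 2) * L (S (S n)) x) - (INR n + 2) * L (S n) x) by ring.
      rewrite HL. ring.
Qed.

Lemma leg_derive m (x : R) : is_derive (L m) x (Dleg m x).
Proof.
  revert x.
  assert (H : forall n, (forall x : R, is_derive (L n) x (Dleg n x)) /\ (forall x : R, is_derive (L (S n)) x (Dleg (S n) x))).
  { induction n as [|n [IH1 IH2]].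
    - split; intros x.
      + apply dR_ext with (fun _ => 1). { intros; reflexivity. } apply dR_const.
      + apply dR_ext with (fun y => y). { intros; reflexivity. }
        eapply dR_eq. apply dR_id. simpl. rewrite leg_0. ring.
    - split. exact IH2. intros x.
      pose proof (INR_pos_2 n) as Hn.
      apply dR_ext with (fun y => ((2 * INR n + 3) * y * L (S n) y - (INR n + 1) * L n y) / (INR n + 2)).
      { intros y. rewrite leg_SS. reflexivity. }
      apply dR_ext with (fun y => / (INR n + 2) * (((2 * INR n + 3) * y) * L (S n) y - (INR n + 1) * L n y)).
      { intros y. unfold Rdiv. ring. }
      eapply dR_eq. apply is_derive_scal. apply dR_minus.
      apply dR_mult. apply is_derive_scal. apply dR_id. apply IH2.
      apply is_derive_scal. apply IH1.
      destruct (Dleg_id n x) as [E1 _].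
      change (Dleg (S (S n)) x) with (x * Dleg (S n) x + INR (S (S n)) * L (S n) x).
      assert (E : Dleg n x = x * Dleg (S n) x - INR (S n) * L (S n) x) by lra.
      rewrite E. rewrite !S_INR. field. lra. }
  apply H.
Qed.

Lemma Dleg_diff j x : Dleg (S (S j)) x - Dleg j x = (2 * INR j + 3) * L (S j) x.
Proof.
  destruct (Dleg_id j x) as [E1 _].
  change (Dleg (S (S j)) x) with (x * Dleg (S j) x + INR (S (S j)) * L (S j) x).
  rewrite !S_INR in *. lra.
Qed.

Fixpoint IsPoly (d : nat) (f : R -> R) : Prop :=
  match d with
  | O => exists c, forall x, f x = c
  | S d' => exists c g, IsPoly d' g /\ forall x, f x = c + x * g x
  end.

Lemma IsPoly_ext d : forall f g, (forall x, f x = g x) -> IsPoly d f -> IsPoly d g.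
Proof.
  induction d as [|d IH]; intros f g E H.
  - destruct H as [c Hc]. exists c. intros x. rewrite <- E. auto.
  - destruct H as (c & h & Hh & Hf). exists c, h. split; auto. intros x. rewrite <- E. auto.
Qed.

Lemma IsPoly_const d c : IsPoly d (fun _ => c).
Proof.
  induction d as [|d IH].
  - exists c; auto.
  - exists c, (fun _ => 0). split. 
    + clear IH. induction d; simpl. exists 0; auto. exists 0, (fun _ => 0). split; auto. intros; ring.
    + intros; ring.
Qed.

Lemma IsPoly_S d : forall f, IsPoly d f -> IsPoly (S d) f.
Proof.
  induction d as [|d IH]; intros f H.
  - destruct H as [c Hc]. exists c, (fun _ => 0). split. exists 0; auto. intros x; rewrite Hc; ring.
  - destruct H as (c & g & Hg & Hf). exists c, g. split; auto.
Qed.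

Lemma IsPoly_le d d' f : (d <= d')%nat -> IsPoly d f -> IsPoly d' f.
Proof. intros Hle. induction Hle; auto. intros H. apply IsPoly_S; auto. Qed.

Lemma IsPoly_plus d : forall f g, IsPoly d f -> IsPoly d g -> IsPoly d (fun x => f x + g x).
Proof.
  induction d as [|d IH]; intros f g Hf Hg.
  - destruct Hf as [c Hc]; destruct Hg as [c' Hc']. exists (c + c'). intros x; rewrite Hc, Hc'; auto.
  - destruct Hf as (c & f1 & H1 & E1). destruct Hg as (c' & g1 & H2 & E2).
    exists (c + c'), (fun x => f1 x + g1 x). split; auto. intros x; rewrite E1, E2; ring.
Qed.

Lemma IsPoly_scal d : forall a f, IsPoly d f -> IsPoly d (fun x => a * f x).
Proof.
  induction d as [|d IH]; intros a f Hf.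
  - destruct Hf as [c Hc]. exists (a*c). intros x; rewrite Hc; auto.
  - destruct Hf as (c & f1 & H1 & E1). exists (a*c), (fun x => a * f1 x). split; auto.
    intros x; rewrite E1; ring.
Qed.

Lemma IsPoly_minus d f g : IsPoly d f -> IsPoly d g -> IsPoly d (fun x => f x - g x).
Proof.
  intros Hf Hg. apply IsPoly_ext with (fun x => f x + (-1) * g x). intros; ring.
  apply IsPoly_plus; auto. apply IsPoly_scal; auto.
Qed.

Lemma IsPoly_mulx d f : IsPoly d f -> IsPoly (S d) (fun x => x * f x).
Proof. intros H. exists 0, f. split; auto. intros; ring. Qed.

Lemma IsPoly_mult a : forall b f g, IsPoly a f -> IsPoly b g -> IsPoly (a + b) (fun x => f x * g x).
Proof.
  induction a as [|a IH]; intros b f g Hf Hg.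
  - destruct Hf as [c Hc]. simpl. apply IsPoly_ext with (fun x => c * g x).
    intros; rewrite Hc; auto. apply IsPoly_scal; auto.
  - destruct Hf as (c & f1 & H1 & E1).
    apply IsPoly_ext with (fun x => c * g x + x * (f1 x * g x)).
    { intros x; rewrite E1; ring. }
    apply IsPoly_plus.
    + apply IsPoly_le with b. lia. apply IsPoly_scal; auto.
    + simpl. apply IsPoly_mulx. apply IH; auto.
Qed.

Lemma IsPoly_deriv d : forall f, IsPoly (S d) f ->
  exists f', IsPoly d f' /\ forall x : R, is_derive f x (f' x).
Proof.
  induction d as [|d IH]; intros f Hf.
  - destruct Hf as (c & g & [c' Hg] & E). exists (fun _ => c'). split. exists c'; auto.
    intros x. apply dR_ext with (fun y => c + c' * y). intros; rewrite E, Hg; ring.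
    eapply dR_eq. apply dR_plus. apply dR_const. apply is_derive_scal. apply dR_id. ring.
  - destruct Hf as (c & g & Hg & E).
    destruct (IH g Hg) as (g' & Hg' & Dg).
    exists (fun x => g x + x * g' x). split.
    + apply IsPoly_plus. auto. apply IsPoly_mulx; auto.
    + intros x. apply dR_ext with (fun y => c + y * g y). intros; rewrite E; auto.
      eapply dR_eq. apply dR_plus. apply dR_const. apply dR_mult. apply dR_id. apply Dg. cbv beta. ring.
Qed.

Lemma IsPoly_cont d f (x : R) : IsPoly d f -> continuous f x.
Proof.
  intros H. apply IsPoly_S in H. destruct (IsPoly_deriv d f H) as (f' & _ & Df).
  apply (ex_derive_continuous (K := R_AbsRing) f x). exists (f' x). apply Df.
Qed.

Lemma IsPoly_bound d : forall f, IsPoly d f -> exists B, forall x, -1 <= x <= 1 -> Rabs (f x) <= B.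
Proof.
  induction d as [|d IH]; intros f Hf.
  - destruct Hf as [c Hc]. exists (Rabs c). intros x _. rewrite Hc. lra.
  - destruct Hf as (c & g & Hg & E). destruct (IH g Hg) as [B HB].
    exists (Rabs c + B). intros x Hx. rewrite E.
    eapply Rle_trans. apply Rabs_triang. apply Rplus_le_compat_l.
    rewrite Rabs_mult. specialize (HB x Hx).
    assert (Rabs x <= 1) by (apply Rabs_le; lra).
    pose proof (Rabs_pos (g x)). pose proof (Rabs_pos x). nra.
Qed.

Lemma IsPoly_leg m : IsPoly m (L m).
Proof.
  assert (H : forall n, IsPoly n (L n) /\ IsPoly (S n) (L (S n))).
  { induction n as [|n [IH1 IH2]].
    - split. exists 1; auto. exists 0, (fun _ => 1). split. exists 1; auto. intros; rewrite leg_1; ring.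
    - split; auto.
      apply IsPoly_ext with (fun x => ((2 * INR n + 3) / (INR n + 2)) * (x * L (S n) x)
          - ((INR n + 1) / (INR n + 2)) * L n x).
      { intros x. rewrite leg_SS. pose proof (INR_pos_2 n). field. lra. }
      apply IsPoly_minus. apply IsPoly_scal. apply IsPoly_mulx; auto.
      apply IsPoly_scal. apply IsPoly_le with n. lia. auto. }
  apply H.
Qed.

Lemma poly_ex_RInt d f a b : IsPoly d f -> ex_RInt f a b.
Proof. intros H. apply (ex_RInt_continuous (V := R_CompleteNormedModule)). intros z _. eapply IsPoly_cont; eauto. Qed.

Lemma RI_plus (f g : R -> R) a b : ex_RInt f a b -> ex_RInt g a b ->
  RInt (fun x => f x + g x) a b = RInt f a b + RInt g a b.
Proof. intros. apply (RInt_plus f g a b); auto. Qed.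
Lemma RI_scal (f : R -> R) a b c : ex_RInt f a b ->
  RInt (fun x => c * f x) a b = c * RInt f a b.
Proof. intros. apply (RInt_scal f a b c); auto. Qed.
Lemma RI_minus (f g : R -> R) a b : ex_RInt f a b -> ex_RInt g a b ->
  RInt (fun x => f x - g x) a b = RInt f a b - RInt g a b.
Proof. intros. apply (RInt_minus f g a b); auto. Qed.

Definition Poly (f : R -> R) := exists d, IsPoly d f.

Lemma Poly_plus f g : Poly f -> Poly g -> Poly (fun x => f x + g x).
Proof.
  intros [d1 H1] [d2 H2]. exists (Nat.max d1 d2). apply IsPoly_plus.
  apply IsPoly_le with d1; auto; lia. apply IsPoly_le with d2; auto; lia.
Qed.
Lemma Poly_mult f g : Poly f -> Poly g -> Poly (fun x => f x * g x).
Proof. intros [d1 H1] [d2 H2]. exists (d1 + d2)%nat. apply IsPoly_mult; auto. Qed.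
Lemma Poly_const c : Poly (fun _ => c).
Proof. exists 0%nat. apply IsPoly_const. Qed.
Lemma Poly_id : Poly (fun x => x).
Proof. exists 1%nat. exists 0, (fun _ => 1). split. exists 1; auto. intros; ring. Qed.
Lemma Poly_minus f g : Poly f -> Poly g -> Poly (fun x => f x - g x).
Proof.
  intros [d1 H1] [d2 H2]. exists (Nat.max d1 d2). apply IsPoly_minus.
  apply IsPoly_le with d1; auto; lia. apply IsPoly_le with d2; auto; lia.
Qed.
Lemma Poly_leg n : Poly (L n).
Proof. exists n. apply IsPoly_leg. Qed.
Lemma Poly_ext f g : (forall x, f x = g x) -> Poly f -> Poly g.
Proof. intros E [d H]. exists d. eapply IsPoly_ext; eauto. Qed.

Ltac poly := repeat (first [ assumption | apply Poly_leg | apply Poly_const | apply Poly_id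
   | apply Poly_minus | apply Poly_plus | apply Poly_mult ]).

Lemma Poly_ex_RInt f a b : Poly f -> ex_RInt f a b.
Proof. intros [d H]. eapply poly_ex_RInt; eauto. Qed.

Ltac exri := apply Poly_ex_RInt; poly.

Lemma leg_ibp j q q' : (forall x : R, is_derive q x (q' x)) -> Poly q -> Poly q' ->
  RInt (fun x => L (S (S j)) x * q' x) (-1) 1 = 0 ->
  RInt (fun x => L j x * q' x) (-1) 1 = 0 ->
  RInt (fun x => L (S j) x * q x) (-1) 1 = 0.
Proof.
  intros Dq Pq Pq' H1 H2.
  set (df := fun y => (2 * INR j + 3) * (L (S j) y * q y) + (L (S (S j)) y * q' y - L j y * q' y)).
  assert (HI : is_RInt df (-1) 1 (minus ((L (S (S j)) 1 - L j 1) * q 1) ((L (S (S j)) (-1) - L j (-1)) * q (-1)))).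
  { apply (is_RInt_derive (fun y => (L (S (S j)) y - L j y) * q y) df).
    - intros x _. eapply dR_eq. apply dR_mult. apply dR_minus; apply leg_derive. apply Dq.
      unfold df. rewrite Dleg_diff. ring.
    - intros x _. assert (Pdf : Poly df) by (unfold df; poly).
      destruct Pdf as [d Hd]. eapply IsPoly_cont; eauto. }
  rewrite !leg_at1, !leg_atm1 in HI.
  replace (minus ((1 - 1) * q 1) (((-1) ^ S (S j) - (-1) ^ j) * q (-1))) with 0 in HI
    by (unfold minus, plus, opp; simpl; ring).
  apply (is_RInt_unique (V := R_CompleteNormedModule)) in HI. unfold df in HI.
  rewrite RI_plus, RI_scal, RI_minus, H1, H2 in HI by exri.
  pose proof (pos_INR j).
  apply Rmult_eq_reg_l with (2 * INR j + 3). lra. lra.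
Qed.

Lemma RInt_zero_mult (f : R -> R) a b : RInt (fun x => f x * 0) a b = 0.
Proof.
  transitivity (RInt (fun _ => 0) a b).
  apply RInt_ext. intros; apply Rmult_0_r.
  rewrite RInt_const. unfold scal; simpl; unfold mult; simpl. apply Rmult_0_r.
Qed.

Lemma leg_orth d : forall q N, IsPoly d q -> (d < N)%nat ->
  RInt (fun x => L N x * q x) (-1) 1 = 0.
Proof.
  induction d as [|d IH]; intros q N Hq HN.
  - destruct N as [|j]. lia.
    destruct Hq as [c Hc].
    apply leg_ibp with (fun _ => 0).
    + intros x. apply dR_ext with (fun _ => c). intros; auto. apply dR_const.
    + exists 0%nat. exists c; auto.
    + poly.
    + apply RInt_zero_mult.
    + apply RInt_zero_mult.
  - destruct N as [|j]. lia.
    destruct (IsPoly_deriv d q Hq) as (q' & Hq' & Dq).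
    apply leg_ibp with q'; auto.
    + exists (S d); auto.
    + exists d; auto.
    + apply IH; auto; lia.
    + apply IH; auto; lia.
Qed.

Lemma RI_ext (f g : R -> R) a b : (forall x, Rmin a b < x < Rmax a b -> f x = g x) ->
  RInt f a b = RInt g a b.
Proof. intros H. apply RInt_ext. exact H. Qed.

Ltac fixeq := match goal with |- @eq _ ?a ?b => change (@eq R a b) end.

Definition Nrm k := RInt (fun x => L k x * L k x) (-1) 1.

Lemma xLL k : RInt (fun x => L (S k) x * (x * L k x)) (-1) 1 = (INR k + 1) / (2 * INR k + 3) * Nrm k.
Proof.
  pose proof (pos_INR k) as Hk.
  rewrite (RI_ext _ (fun x => (INR k + 2) / (2 * INR k + 3) * (L (S (S k)) x * L k x)
      + (INR k + 1) / (2 * INR k + 3) * (L k x * L k x))).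
  2:{ intros x _. rewrite leg_SS. field. lra. }
  rewrite RI_plus, !RI_scal by exri.
  rewrite (leg_orth k (L k) (S (S k))). unfold Nrm. fixeq. ring.
  apply IsPoly_leg. lia.
Qed.

Lemma leg_norm k : Nrm k = 2 / (2 * INR k + 1).
Proof.
  induction k as [|k IH].
  - unfold Nrm. rewrite (RI_ext _ (fun _ => 1)). rewrite RInt_const. 
    unfold scal; simpl; unfold mult; simpl. field.
    intros x _. rewrite leg_0. ring.
  - pose proof (pos_INR k) as Hk.
    assert (E : (INR k + 1) * Nrm (S k) = (2 * INR k + 1) * ((INR k + 1) / (2 * INR k + 3) * Nrm k)).
    { rewrite <- xLL. unfold Nrm. rewrite <- RI_scal by exri.
      rewrite (RI_ext _ (fun x => (2 * INR k + 1) * (L (S k) x * (x * L k x)) - INR k * (L (S k) x * L (k - 1) x))).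
      2:{ intros x _. pose proof (leg_rec k x) as R. 
          replace ((INR k + 1) * (L (S k) x * L (S k) x)) with (L (S k) x * ((INR k + 1) * L (S k) x)) by ring.
          rewrite R. ring. }
      rewrite RI_minus, !RI_scal by exri.
      rewrite (leg_orth (k - 1) (L (k - 1)) (S k)). ring.
      apply IsPoly_leg. lia. }
    rewrite IH in E. rewrite S_INR.
    apply Rmult_eq_reg_l with (INR k + 1). 2: lra. rewrite E. field. lra.
Qed.

Lemma geom_series B r : 0 <= r < 1 -> is_series (fun k => B * r ^ k) (B / (1 - r)).
Proof.
  intros Hr. unfold Rdiv. apply (is_series_scal_l B (fun k => r ^ k)).
  apply is_series_geom. rewrite Rabs_pos_eq; lra.
Qed.

Lemma tail_le (a : nat -> R) B r : 0 <= r < 1 -> (forall k, Rabs (a k) <= B * r ^ k) ->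
  ex_series a /\ forall N, Rabs (Series (fun k => a (N + k)%nat)) <= B * r ^ N / (1 - r).
Proof.
  intros Hr Ha. split.
  - apply ex_series_Rabs. apply (ex_series_le (V := R_CompleteNormedModule) _ (fun k => B * r ^ k)).
    intros n. unfold norm; simpl. rewrite Rabs_Rabsolu. apply Ha.
    eexists. apply geom_series; auto.
  - intros N.
    assert (Hb : is_series (fun k => (B * r ^ N) * r ^ k) (B * r ^ N / (1 - r))) by (apply geom_series; auto).
    eapply Rle_trans. apply Series_Rabs.
    { apply (ex_series_le (V := R_CompleteNormedModule) _ (fun k => (B * r ^ N) * r ^ k)).
      intros n. unfold norm; simpl. rewrite Rabs_Rabsolu. rewrite Rmult_assoc, <- pow_add. apply Ha.
      eexists; eauto. }
    rewrite <- (is_series_unique _ _ Hb).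
    apply Series_le. intros n. split. apply Rabs_pos. rewrite Rmult_assoc, <- pow_add. apply Ha.
    eexists; eauto.
Qed.

Definition cl x := Rmax (-1) (Rmin 1 x).
Lemma cl_in x : -1 <= cl x <= 1.
Proof. unfold cl, Rmax, Rmin. repeat destruct Rle_dec; lra. Qed.
Lemma cl_id x : -1 <= x <= 1 -> cl x = x.
Proof. intros. unfold cl, Rmax, Rmin. repeat destruct Rle_dec; lra. Qed.

Definition PS (c : nat -> R) N x := sum_n (fun k => c k * L k x) N.

Lemma PS_poly c N : Poly (PS c N).
Proof.
  induction N as [|N IH].
  - apply Poly_ext with (fun x => c 0%nat * L 0 x). intros; unfold PS; rewrite sum_O; auto. poly.
  - apply Poly_ext with (fun x => PS c N x + c (S N) * L (S N) x).
    intros; unfold PS; rewrite sum_Sn; auto. poly.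
Qed.

Lemma PS_int c g N : Poly g -> RInt (fun x => PS c N x * g x) (-1) 1 =
  sum_n (fun k => c k * RInt (fun x => L k x * g x) (-1) 1) N.
Proof.
  intros Pg. pose proof (PS_poly c) as PP. induction N as [|N IH].
  - rewrite sum_O. rewrite <- RI_scal by exri. apply RI_ext. intros x _. unfold PS. rewrite sum_O.
    cbv beta. fixeq. ring.
  - rewrite sum_Sn. rewrite <- IH. rewrite <- RI_scal by exri. pose proof (PP N) as PPN.
    change (plus ?a ?b) with (a + b). rewrite <- RI_plus by exri.
    apply RI_ext. intros x _. unfold PS. rewrite sum_Sn. change (plus ?a ?b) with (a + b). fixeq. ring.
Qed.

Lemma PS_tail c K r N y : 0 <= r < 1 -> (forall k, Rabs (c k) <= K * r ^ k) -> -1 <= y <= 1 ->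
  Rabs (leg_series c y - PS c N y) <= K * r ^ (S N) / (1 - r).
Proof.
  intros Hr Hc Hy.
  assert (Ha : forall k, Rabs (c k * L k y) <= K * r ^ k).
  { intros k. rewrite Rabs_mult. pose proof (leg_bound k y Hy). pose proof (Rabs_pos (c k)).
    pose proof (Rabs_pos (L k y)). specialize (Hc k). nra. }
  destruct (tail_le _ K r Hr Ha) as [Ex Tl].
  unfold leg_series, PS. rewrite (Series_incr_n _ (S N)) by (auto; lia).
  rewrite sum_n_Reals. simpl pred.
  replace (sum_f_R0 (fun k : nat => c k * L k y) N + Series (fun k : nat => c (S N + k)%nat * L (S N + k) y) -
    sum_f_R0 (fun k : nat => c k * L k y) N) with (Series (fun k : nat => c (S N + k)%nat * L (S N + k) y)) by ring.
  apply Tl.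
Qed.

Lemma sum_zero (a : nat -> R) n : (forall k, (k <= n)%nat -> a k = 0) -> sum_f_R0 a n = 0.
Proof.
  induction n as [|n IH]; intros H; simpl. apply H; lia.
  rewrite IH. rewrite (H (S n)) by lia. ring. intros; apply H; lia.
Qed.

Lemma series_shift_zero (a : nat -> R) d0 : ex_series a -> (forall k, (k < d0)%nat -> a k = 0) ->
  Series a = Series (fun k => a (d0 + k)%nat).
Proof.
  intros Ex H. destruct d0 as [|d].
  - apply Series_ext. intros; reflexivity.
  - rewrite (Series_incr_n a (S d)) by (auto; lia). simpl pred. rewrite sum_zero. ring.
    intros; apply H; lia.
Qed.

Lemma series_int c K r g d0 M : 0 <= r < 1 -> 0 <= K -> (forall k, Rabs (c k) <= K * r ^ k) -> Poly g ->
  (forall k, (k < d0)%nat -> RInt (fun x => L k x * g x) (-1) 1 = 0) ->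
  (forall k, Rabs (RInt (fun x => L k x * g x) (-1) 1) <= M) ->
  Rabs (RInt (fun x => leg_series c x * g x) (-1) 1) <= M * K * r ^ d0 / (1 - r).
Proof.
  intros Hr HK Hc Pg Hz HM.
  set (J k := RInt (fun x => L k x * g x) (-1) 1) in *.
  set (a k := c k * J k).
  assert (M0 : 0 <= M) by (eapply Rle_trans; [apply Rabs_pos| apply (HM 0%nat)]).
  assert (Ha : forall k, Rabs (a k) <= (M*K) * r ^ k).
  { intros k. unfold a. rewrite Rabs_mult. pose proof (HM k). pose proof (Hc k).
    replace (M * K * r ^ k) with ((K * r ^ k) * M) by ring.
    apply Rmult_le_compat; auto; apply Rabs_pos. }
  destruct (tail_le a (M*K) r Hr Ha) as [Exa Ta].
  destruct Pg as [dg Pg'].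
  destruct (IsPoly_bound dg g Pg') as [B HB].
  assert (B0 : 0 <= B) by (eapply Rle_trans; [apply Rabs_pos| apply (HB 0); lra]).
  assert (Hlim : filterlim (fun N x => PS c N (cl x) * g (cl x)) eventually
                   (locally (fun x => leg_series c (cl x) * g (cl x)))).
  { apply filterlim_locally. intros eps.
    assert (He : 0 < eps * (1 - r) / ((B + 1) * (K + 1))).
    { apply Rdiv_lt_0_compat. apply Rmult_lt_0_compat. apply cond_pos. lra. nra. }
    destruct (pow_lt_1_zero r ltac:(rewrite Rabs_pos_eq; lra) _ He) as [N0 HN0].
    exists N0. intros N HN t. 
    change (Rabs (PS c N (cl t) * g (cl t) - leg_series c (cl t) * g (cl t)) < eps).
    specialize (HN0 N HN). rewrite Rabs_pos_eq in HN0 by (apply pow_le; lra).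
    pose proof (PS_tail c K r N (cl t) Hr Hc (cl_in t)) as T.
    pose proof (HB (cl t) (cl_in t)) as G.
    replace (PS c N (cl t) * g (cl t) - leg_series c (cl t) * g (cl t)) with
      (- (g (cl t) * (leg_series c (cl t) - PS c N (cl t)))) by ring.
    rewrite Rabs_Ropp, Rabs_mult.
    assert (Hrn : r ^ S N <= r ^ N) by (simpl; pose proof (pow_le r N ltac:(lra)); nra).
    assert (Q : K * r ^ S N / (1 - r) <= (K + 1) * r ^ N / (1 - r)).
    { apply Rmult_le_compat_r. left; apply Rinv_0_lt_compat; lra.
      pose proof (pow_le r (S N) ltac:(lra)). nra. }
    assert (Q2 : (K + 1) * r ^ N / (1 - r) < eps / (B + 1)).
    { apply Rmult_lt_reg_r with ((1 - r) / (K + 1)). apply Rdiv_lt_0_compat; lra.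
      replace ((K + 1) * r ^ N / (1 - r) * ((1 - r) / (K + 1))) with (r ^ N) by (field; lra).
      replace (eps / (B + 1) * ((1 - r) / (K + 1))) with (eps * (1 - r) / ((B + 1) * (K + 1))) by (field; lra).
      exact HN0. }
    pose proof (Rabs_pos (g (cl t))). pose proof (Rabs_pos (leg_series c (cl t) - PS c N (cl t))).
    assert (Q3 : B * (eps / (B + 1)) < eps).
    { replace (B * (eps / (B + 1))) with (eps * (B / (B + 1))) by (field; lra).
      pose proof (cond_pos eps). apply Rmult_lt_reg_r with (B + 1). lra.
      replace (eps * (B / (B + 1)) * (B + 1)) with (eps * B) by (field; lra). nra. }
    nra. }
  destruct (filterlim_RInt (V := R_CompleteNormedModule) (fun N x => PS c N (cl x) * g (cl x)) (-1) 1 eventually eventually_filter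
     (fun x => leg_series c (cl x) * g (cl x)) (fun N => sum_n a N)) as [If [HIf HIs]].
  { intros N. apply (is_RInt_ext (fun x => PS c N x * g x)).
    { intros x Hx. rewrite Rmin_left, Rmax_right in Hx by lra. rewrite cl_id by lra. reflexivity. }
    assert (E : sum_n a N = RInt (fun x => PS c N x * g x) (-1) 1).
    { rewrite PS_int by (exists dg; auto). reflexivity. }
    rewrite E. apply (RInt_correct (V := R_CompleteNormedModule)). apply Poly_ex_RInt. apply Poly_mult. apply PS_poly. exists dg; auto. }
  { exact Hlim. }
  assert (EIf : If = Series a). { symmetry. apply is_series_unique. exact HIf. }
  assert (ER : RInt (fun x => leg_series c x * g x) (-1) 1 = Series a).
  { rewrite <- EIf. apply (is_RInt_unique (V := R_CompleteNormedModule)).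
    apply (is_RInt_ext (fun x => leg_series c (cl x) * g (cl x))).
    { intros x Hx. rewrite Rmin_left, Rmax_right in Hx by lra. rewrite cl_id by lra. reflexivity. }
    exact HIs. }
  rewrite ER. rewrite (series_shift_zero a d0 Exa).
  eapply Rle_trans. apply Ta. right. reflexivity.
  intros k Hk. unfold a, J. rewrite (Hz k Hk). ring.
Qed.

Lemma pow_decr r a b : 0 <= r <= 1 -> (a <= b)%nat -> r ^ b <= r ^ a.
Proof.
  intros Hr Hab. induction Hab. lra.
  simpl. pose proof (pow_le r m ltac:(lra)). nra.
Qed.

Lemma exp_pow_nat e k : exp (- e * INR k) = exp (- e) ^ k.
Proof.
  induction k as [|k IH]. simpl. replace (- e * 0) with 0 by ring. apply exp_0.
  rewrite S_INR. replace (- e * (INR k + 1)) with (- e * INR k + - e) by ring.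
  rewrite exp_plus, IH. simpl. ring.
Qed.

Definition sq m := sqrt (4 * INR m - 2).

Lemma sq_ge2 j : 2 <= sq (S (S j)).
Proof.
  unfold sq. rewrite !S_INR. pose proof (pos_INR j).
  assert (H4 : 0 <= 4 * (INR j + 1 + 1) - 2) by lra.
  pose proof (sqrt_sqrt _ H4). pose proof (sqrt_pos (4 * (INR j + 1 + 1) - 2)). nra.
Qed.

Lemma deriv_eta j x : Derive (bs_eta (S (S j))) x = - (2 * INR j + 3) / sq (S (S j)) * L (S j) x.
Proof.
  pose proof (sq_ge2 j) as Hs.
  apply is_derive_unique. unfold bs_eta. replace (S (S j) - 2)%nat with j by lia.
  eapply dR_eq. apply is_derive_scal. apply dR_minus; apply leg_derive.
  replace (Dleg j x - Dleg (S (S j)) x) with (- (Dleg (S (S j)) x - Dleg j x)) by ring.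
  rewrite Dleg_diff. fold (sq (S (S j))). field. lra.
Qed.

Lemma eta_eq j x : bs_eta (S (S j)) x = / sq (S (S j)) * (L j x - L (S (S j)) x).
Proof. unfold bs_eta. replace (S (S j) - 2)%nat with j by lia. reflexivity. Qed.

Lemma eta_bound j x : -1 <= x <= 1 -> Rabs (bs_eta (S (S j)) x) <= 1.
Proof.
  intros Hx. rewrite eta_eq. pose proof (sq_ge2 j) as Hs.
  rewrite Rabs_mult, Rabs_inv, Rabs_pos_eq by lra.
  pose proof (leg_bound j x Hx). pose proof (leg_bound (S (S j)) x Hx).
  assert (Rabs (L j x - L (S (S j)) x) <= 2).
  { eapply Rle_trans. apply Rabs_triang. rewrite Rabs_Ropp. lra. }
  apply Rmult_le_reg_l with (sq (S (S j))). lra.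
  rewrite <- Rmult_assoc, Rinv_r by lra. lra.
Qed.

Lemma cm_norm j : ((2 * INR j + 3) / sq (S (S j))) ^ 2 * Nrm (S j) = 1.
Proof.
  rewrite leg_norm. pose proof (sq_ge2 j) as Hs. pose proof (pos_INR j).
  assert (E : sq (S (S j)) * sq (S (S j)) = 4 * INR (S (S j)) - 2).
  { unfold sq. apply sqrt_sqrt. rewrite !S_INR. lra. }
  rewrite !S_INR in *. 
  replace (((2 * INR j + 3) / sq (S (S j))) ^ 2) with ((2 * INR j + 3)^2 / (sq (S (S j)) * sq (S (S j)))) by (field; lra).
  rewrite E. field. lra.
Qed.

Lemma abs_le_both x y : Rabs x <= y -> - y <= x <= y.
Proof. unfold Rabs. destruct Rcase_abs; lra. Qed.

Lemma prod_bound a P Q : Rabs a <= 1 -> Rabs (a * (P * Q)) <= (P * P + Q * Q) / 2.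
Proof.
  intros Ha. apply abs_le_both in Ha.
  pose proof (pow2_ge_0 (P - Q)). pose proof (pow2_ge_0 (P + Q)).
  assert (- ((P * P + Q * Q) / 2) <= P * Q <= (P * P + Q * Q) / 2) by nra.
  unfold Rabs. destruct Rcase_abs; nra.
Qed.

Lemma RInt_abs_bound (f G : R -> R) : ex_RInt f (-1) 1 -> ex_RInt G (-1) 1 ->
  (forall x, -1 <= x <= 1 -> Rabs (f x) <= G x) -> Rabs (RInt f (-1) 1) <= RInt G (-1) 1.
Proof.
  intros Ef EG H. 
  assert (E2 : ex_RInt (fun x => -1 * G x) (-1) 1) by (apply (ex_RInt_scal G (-1) 1 (-1)); auto).
  apply Rabs_le. split.
  - replace (- RInt G (-1) 1) with (-1 * RInt G (-1) 1) by ring. rewrite <- RI_scal by auto.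
    apply RInt_le; auto. lra.
    intros x Hx. specialize (H x ltac:(lra)). apply abs_le_both in H. lra.
  - apply RInt_le; auto. lra.
    intros x Hx. specialize (H x ltac:(lra)). apply abs_le_both in H. lra.
Qed.

Lemma T1_bound nu Ce r j l : 0 <= r < 1 -> 0 <= Ce -> (forall k, Rabs (nu k) <= Ce * r ^ k) -> (j <= l)%nat ->
  Rabs (RInt (fun x => leg_series nu x * Derive (bs_eta (S (S j))) x * Derive (bs_eta (S (S l))) x) (-1) 1)
  <= 1 * Ce * r ^ (l - j) / (1 - r).
Proof.
  intros Hr HCe Hnu Hjl.
  set (cm := - (2 * INR j + 3) / sq (S (S j))).
  set (cn := - (2 * INR l + 3) / sq (S (S l))).
  rewrite (RI_ext _ (fun x => leg_series nu x * (cm * L (S j) x * (cn * L (S l) x)))).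
  2:{ intros x _. rewrite !deriv_eta. fold cm cn. ring. }
  apply series_int; auto.
  - poly.
  - intros k Hk.
    rewrite (RI_ext _ (fun x => L (S l) x * ((cm * cn) * (L k x * L (S j) x)))).
    2:{ intros x _. ring. }
    apply (leg_orth (k + S j)). apply IsPoly_scal. apply IsPoly_mult; apply IsPoly_leg. lia.
  - intros k.
    eapply Rle_trans. apply (RInt_abs_bound _ (fun x => (cm ^ 2 / 2) * (L (S j) x * L (S j) x) + (cn ^ 2 / 2) * (L (S l) x * L (S l) x))).
    exri. exri.
    { intros x Hx. replace ((cm ^ 2 / 2) * (L (S j) x * L (S j) x) + (cn ^ 2 / 2) * (L (S l) x * L (S l) x))
        with (((cm * L (S j) x) * (cm * L (S j) x) + (cn * L (S l) x) * (cn * L (S l) x)) / 2) by field.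
      apply prod_bound. apply leg_bound; auto. }
    rewrite RI_plus, !RI_scal by exri. fold (Nrm (S j)) (Nrm (S l)).
    replace (cm ^ 2) with (((2 * INR j + 3) / sq (S (S j))) ^ 2) by (unfold cm; unfold Rdiv; ring).
    replace (cn ^ 2) with (((2 * INR l + 3) / sq (S (S l))) ^ 2) by (unfold cn; unfold Rdiv; ring).
    pose proof (cm_norm j). pose proof (cm_norm l). lra.
Qed.

Lemma T2_bound sg Ce r j l : 0 <= r < 1 -> 0 <= Ce -> (forall k, Rabs (sg k) <= Ce * r ^ k) -> (j <= l)%nat ->
  Rabs (RInt (fun x => leg_series sg x * bs_eta (S (S j)) x * bs_eta (S (S l)) x) (-1) 1)
  <= 2 * Ce * r ^ (l - j - 2) / (1 - r).
Proof.
  intros Hr HCe Hs Hjl.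
  set (sm := / sq (S (S j))). set (sn := / sq (S (S l))).
  rewrite (RI_ext _ (fun x => leg_series sg x * (bs_eta (S (S j)) x * bs_eta (S (S l)) x))).
  2:{ intros x _. ring. }
  apply series_int; auto.
  - apply Poly_ext with (fun x => (sm * (L j x - L (S (S j)) x)) * (sn * (L l x - L (S (S l)) x))).
    intros x; rewrite !eta_eq; reflexivity. poly.
  - intros k Hk.
    set (q := fun x => sn * (L k x * (sm * (L j x - L (S (S j)) x)))).
    assert (Hq : IsPoly (k + S (S j)) q).
    { apply IsPoly_scal. apply IsPoly_mult. apply IsPoly_leg. apply IsPoly_scal. apply IsPoly_minus.
      apply IsPoly_le with j. lia. apply IsPoly_leg. apply IsPoly_leg. }
    rewrite (RI_ext _ (fun x => L l x * q x - L (S (S l)) x * q x)).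
    2:{ intros x _. unfold q. rewrite !eta_eq. fold sm sn. ring. }
    rewrite RI_minus by (apply Poly_ex_RInt; apply Poly_mult; [poly | exists (k + S (S j))%nat; auto]).
    rewrite (leg_orth _ q l Hq) by lia. rewrite (leg_orth _ q (S (S l)) Hq) by lia. fixeq. ring.
  - intros k.
    eapply Rle_trans. apply (RInt_abs_bound _ (fun _ => 1)).
    apply Poly_ex_RInt. apply Poly_ext with (fun x => L k x * ((sm * (L j x - L (S (S j)) x)) * (sn * (L l x - L (S (S l)) x)))).
    intros x; rewrite !eta_eq; reflexivity. poly.
    apply ex_RInt_const.
    { intros x Hx. rewrite !Rabs_mult. pose proof (leg_bound k x Hx). pose proof (eta_bound j x Hx).
      pose proof (eta_bound l x Hx). pose proof (Rabs_pos (L k x)).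
      pose proof (Rabs_pos (bs_eta (S (S j)) x)). pose proof (Rabs_pos (bs_eta (S (S l)) x)).
      assert (Rabs (bs_eta (S (S j)) x) * Rabs (bs_eta (S (S l)) x) <= 1) by nra. nra. }
    rewrite RInt_const. unfold scal; simpl; unfold mult; simpl. lra.
Qed.

Lemma a_sym nu sg m n : a_mn nu sg m n = a_mn nu sg n m.
Proof. unfold a_mn. f_equal; apply RI_ext; intros; ring. Qed.

Theorem mainTheorem4 :
  forall (eta C_eta : R), 0 < eta -> 0 < C_eta ->
  exists C : R, 0 < C /\
    forall nu sigma : nat -> R,
      (forall k : nat, Rabs (nu k) <= C_eta * exp (- eta * INR k)) ->
      (forall k : nat, Rabs (sigma k) <= C_eta * exp (- eta * INR k)) ->
      forall m n : nat, (2 <= m)%nat -> (2 <= n)%nat ->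
        Rabs (a_mn nu sigma m n) <= C * exp (- eta * Rabs (INR n - INR m)).
Proof.
  intros eta Ce Heta HCe.
  set (r := exp (- eta)).
  assert (Hr : 0 < r < 1).
  { split. apply exp_pos. unfold r. rewrite <- exp_0. apply exp_increasing. lra. }
  set (C := Ce * (1 + 2 / (r * r)) / (1 - r)).
  assert (HC : 0 < C).
  { unfold C. apply Rdiv_lt_0_compat; [|lra]. apply Rmult_lt_0_compat; auto.
    assert (0 < 2 / (r * r)) by (apply Rdiv_lt_0_compat; nra). lra. }
  exists C. split; auto.
  intros nu sg Hnu Hsg.
  assert (Hnu' : forall k, Rabs (nu k) <= Ce * r ^ k) by (intros k; unfold r; rewrite <- exp_pow_nat; auto).
  assert (Hsg' : forall k, Rabs (sg k) <= Ce * r ^ k) by (intros k; unfold r; rewrite <- exp_pow_nat; auto).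
  assert (Key : forall m n, (2 <= m)%nat -> (m <= n)%nat -> Rabs (a_mn nu sg m n) <= C * r ^ (n - m)).
  { intros m n Hm Hmn.
    destruct m as [|[|j]]; try lia. destruct n as [|[|l]]; try lia.
    assert (Hjl : (j <= l)%nat) by lia.
    replace (S (S l) - S (S j))%nat with (l - j)%nat by lia.
    unfold a_mn. eapply Rle_trans. apply Rabs_triang.
    pose proof (T1_bound nu Ce r j l ltac:(lra) ltac:(lra) Hnu' Hjl) as T1.
    pose proof (T2_bound sg Ce r j l ltac:(lra) ltac:(lra) Hsg' Hjl) as T2.
    assert (P : r ^ (l - j - 2) * (r * r) <= r ^ (l - j)).
    { replace (r * r) with (r ^ 2) by ring. rewrite <- pow_add. apply pow_decr. lra. lia. }
    assert (P2 : r ^ (l - j - 2) <= r ^ (l - j) / (r * r)).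
    { apply Rmult_le_reg_r with (r * r). nra. unfold Rdiv. rewrite Rmult_assoc, Rinv_l by nra. lra. }
    assert (P3 : 2 * Ce * r ^ (l - j - 2) / (1 - r) <= 2 * Ce * (r ^ (l - j) / (r * r)) / (1 - r)).
    { apply Rmult_le_compat_r. left; apply Rinv_0_lt_compat; lra. apply Rmult_le_compat_l; lra. }
    assert (E : C * r ^ (l - j) = 1 * Ce * r ^ (l - j) / (1 - r) + 2 * Ce * (r ^ (l - j) / (r * r)) / (1 - r)).
    { unfold C. field. split; nra. }
    rewrite E. lra. }
  intros m n Hm Hn.
  destruct (Nat.le_gt_cases m n) as [Hmn|Hmn].
  - rewrite (Rabs_pos_eq (INR n - INR m)) by (apply Rge_le, Rge_minus, Rle_ge, le_INR; auto).
    rewrite <- minus_INR by auto. rewrite exp_pow_nat. fold r. apply Key; auto.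
  - rewrite a_sym. rewrite (Rabs_minus_sym (INR n)).
    rewrite (Rabs_pos_eq (INR m - INR n)) by (apply Rge_le, Rge_minus, Rle_ge, le_INR; lia).
    rewrite <- minus_INR by lia. rewrite exp_pow_nat. fold r. apply Key; auto; lia.
Qed.
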